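(* Let $L$ be a number field, $\Gamma$ an order of $L$, $K\subseteq L$ a subfield with ring of integers $\mathcal O_K$ and $n=[L:K]$, and $\varphi:K\to L$ a ring morphism. Then there exists an injection $J_\varphi\hookrightarrow C_\Gamma$.
   Context: Fix a positive integer $z$ with $\varphi(z\mathcal O_K)\subseteq\Gamma$, let $\mathcal O'=\mathbb Z[z\mathcal O_K]$; via $\varphi|_{\mathcal O'}:\mathcal O'\to\Gamma$ each $\Gamma$-module $X$ becomes an $\mathcal O'$-module $X|_{\mathcal O'}$, and $\mathcal O_K^n|_{\mathcal O'}$ denotes $\mathcal O_K^n$ with $\mathcal O'$ acting by multiplication. $J_\varphi$ is the set of isomorphism classes of $\Gamma$-modules $X$ with $X|_{\mathcal O'}\cong\mathcal O_K^n|_{\mathcal O'}$. A fractional ideal of $\Gamma$ is a nonzero $\Gamma$-submodule $I\subseteq L$ with $xI\subseteq\Gamma$ for some nonzero $x\in L$; two are equivalent if $I'=xI$ for some nonzero $x\in L$; $C_\Gamma$ is the set of equivalence classes (a commutative monoid under ideal multiplication). *)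

(* Defs.v *)
From HB Require Import structures.
From mathcomp Require Import all_boot all_order all_algebra all_field.
Set Implicit Arguments. Unset Strict Implicit. Unset Printing Implicit Defensive.
Import Order.TTheory GRing.Theory Num.Theory.
Local Open Scope ring_scope.

(* A number field is modelled as L : fieldExtType rat (finite dimensional over Q). *)

Definition integral_over_Z (R : comNzRingType) (x : R) : Prop :=
  exists p : {poly int}, p \is monic /\ (map_poly intr p).[x] = 0.

Definition ring_of_integers (L : fieldExtType rat) (K : {subfield L})
  (a : subvs_of K) : Prop := integral_over_Z a.

Definition is_order (L : fieldExtType rat) (G : {pred L}) : Prop :=
  [/\ 1 \in G,
      (forall x y, x \in G -> y \in G -> x - y \in G),
      (forall x y, x \in G -> y \in G -> x * y \in G) &
      exists s : seq L,
        (forall x, x \in G <-> exists c : 'I_(size s) -> int,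
                              x = \sum_(i < size s) (s`_i *~ c i)) /\
        <<s>>%VS = fullv].

(* A module over the order G (with G viewed inside L): an abelian group
   with an action of L, of which only the action of elements of G matters. *)
Record GMod (L : fieldExtType rat) (G : {pred L}) := {
  gm_car :> zmodType;
  gm_act : L -> gm_car -> gm_car;
  gm_act1 : forall m, gm_act 1 m = m;
  gm_actM : forall x y m, x \in G -> y \in G ->
              gm_act (x * y) m = gm_act x (gm_act y m);
  gm_actDl : forall x y m, x \in G -> y \in G ->
              gm_act (x + y) m = gm_act x m + gm_act y m;
  gm_actDr : forall x m m', x \in G ->
              gm_act x (m + m') = gm_act x m + gm_act x m'
}.

Definition gmod_iso (L : fieldExtType rat) (G : {pred L}) (X Y : GMod G) : Prop :=
  exists f : X -> Y, bijective f /\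
    (forall m m', f (m + m') = f m + f m') /\
    (forall x m, x \in G -> f (gm_act x m) = gm_act x (f m)).

(* O' = Z[z O_K] = Z + z O_K, as a predicate on the type of K. *)
Definition Oprime (L : fieldExtType rat) (K : {subfield L}) (z : nat)
  (a : subvs_of K) : Prop :=
  exists (k : int) (b : subvs_of K),
    ring_of_integers b /\ a = k%:~R + z%:R * b.

(* O_K^n is modelled as the
   subgroup of row vectors 'rV[K]_n with all entries in O_K. *)
Definition in_J (L : fieldExtType rat) (G : {pred L}) (K : {subfield L})
  (phi : {rmorphism subvs_of K -> L}) (z n : nat) (X : GMod G) : Prop :=
  exists f : X -> 'rV[subvs_of K]_n,
    [/\ injective f,
        (forall v : 'rV[subvs_of K]_n,
            (forall i, ring_of_integers (v 0 i)) <-> exists m, f m = v),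
        (forall m m', f (m + m') = f m + f m') &
        (forall a m, Oprime z a -> f (gm_act (phi a) m) = a *: f m)].

Definition frac_ideal (L : fieldExtType rat) (G : {pred L}) (I : L -> Prop) : Prop :=
  [/\ I 0,
      (forall x y, I x -> I y -> I (x + y)),
      (forall g x, g \in G -> I x -> I (g * x)),
      (exists x, x != 0 /\ I x) &
      exists x, x != 0 /\ forall y, I y -> x * y \in G].

Definition frac_equiv (L : fieldExtType rat) (I I' : L -> Prop) : Prop :=
  exists x : L, x != 0 /\ forall y, I' y <-> exists w, I w /\ y = x * w.

(* Main.v *)
Require Import Defs.
From HB Require Import structures.
From mathcomp Require Import all_boot all_order all_algebra all_field.
From Stdlib Require Import ClassicalEpsilon.
From mathcomp Require Import ring.
Set Implicit Arguments. Unset Strict Implicit. Unset Printing Implicit Defensive.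
Import Order.TTheory GRing.Theory Num.Theory.
Local Open Scope ring_scope.

Lemma ordG0 (L : fieldExtType rat) (G : {pred L}) : is_order G -> 0 \in G.
Proof. by case=> G1 GB _ _; rewrite -(subrr 1) GB. Qed.

Lemma ordGN (L : fieldExtType rat) (G : {pred L}) x :
  is_order G -> x \in G -> - x \in G.
Proof. move=> hG Gx; rewrite -sub0r; case: (hG) => _ GB _ _; exact: GB (ordG0 hG) Gx. Qed.

Lemma ordGD (L : fieldExtType rat) (G : {pred L}) x y :
  is_order G -> x \in G -> y \in G -> x + y \in G.
Proof. move=> hG Gx Gy; rewrite -[y]opprK; case: (hG) => _ GB _ _; exact: GB (ordGN hG Gy). Qed.

Lemma ordGB (L : fieldExtType rat) (G : {pred L}) x y :
  is_order G -> x \in G -> y \in G -> x - y \in G.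
Proof. by case=> _ GB _ _; apply: GB. Qed.

Lemma ordGM (L : fieldExtType rat) (G : {pred L}) x y :
  is_order G -> x \in G -> y \in G -> x * y \in G.
Proof. by case=> _ _ GM _; apply: GM. Qed.

Lemma ordGz (L : fieldExtType rat) (G : {pred L}) x (k : int) :
  is_order G -> x \in G -> x *~ k \in G.
Proof.
move=> hG Gx.
have Hn : forall n : nat, x *+ n \in G.
  elim=> [|n IH]; first by rewrite mulr0n ordG0.
  by rewrite mulrS ordGD.
case: k => n; first exact: (Hn n).
by rewrite NegzE mulrNz ordGN // Hn.
Qed.

Lemma ordG_int (L : fieldExtType rat) (G : {pred L}) (k : int) :
  is_order G -> (k%:~R : L) \in G.
Proof. by move=> hG; apply: ordGz => //; case: hG. Qed.

Lemma ordG_sum (L : fieldExtType rat) (G : {pred L}) (I : Type) (r : seq I)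
  (P : pred I) (F : I -> L) :
  is_order G -> (forall i, P i -> F i \in G) -> \sum_(i <- r | P i) F i \in G.
Proof.
move=> hG HF; apply: (big_ind (fun x => x \in G)) => //; first exact: ordG0.
by move=> x y; apply: ordGD.
Qed.

Lemma intr_neq0_L (L : fieldExtType rat) (k : int) : k != 0 -> (k%:~R : L) != 0.
Proof.
move=> k0; have -> : (k%:~R : L) = (k%:~R : rat)%:A by rewrite -in_algE rmorph_int.
by rewrite scaler_eq0 oner_eq0 orbF intr_eq0.
Qed.

Lemma ordG_denom (L : fieldExtType rat) (G : {pred L}) (l : L) :
  is_order G -> exists d : int, d != 0 /\ l *~ d \in G.
Proof.
move=> hG; case: (hG) => _ _ _ [s [Hs Hspan]].
pose P y := exists d : int, d != 0 /\ y *~ d \in G.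
have sG : forall i : 'I_(size s), s`_i \in G.
  move=> i; apply/Hs; exists (fun j => ((j == i) : nat)%:Z).
  rewrite (bigD1 i) //= eqxx mulr1z big1 ?addr0 // => j /negbTE ->.
  by rewrite mulr0z.
have lspan : l \in <<in_tuple s>>%VS by rewrite /= Hspan memvf.
rewrite (coord_span lspan).
apply: (big_ind P).
- by exists 1; rewrite mul0rz ordG0.
- move=> x y [dx [dx0 Gx]] [dy [dy0 Gy]]; exists (dx * dy); split.
    by rewrite mulf_neq0.
  rewrite mulrzDl; apply: ordGD => //.
    by rewrite mulrzA ordGz.
  by rewrite mulrC mulrzA ordGz.
- move=> i _; set q := coord _ _ _; exists (denq q); split; first exact: denq_neq0.
  by rewrite scalerMzl -mulrzr -numqE scaler_int ordGz.
Qed.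

Lemma ordG_denoms (L : fieldExtType rat) (G : {pred L}) (s : seq L) :
  is_order G -> exists d : int, d != 0 /\ forall l, l \in s -> l *~ d \in G.
Proof.
move=> hG; elim: s => [|x s [d [d0 Hd]]]; first by exists 1.
have [e [e0 He]] := ordG_denom x hG.
exists (e * d); split; first by rewrite mulf_neq0.
move=> l; rewrite inE => /orP [/eqP->|ls]; first by rewrite mulrzA ordGz.
by rewrite mulrC mulrzA ordGz // Hd.
Qed.

Lemma addf0 (U V : zmodType) (f : U -> V) :
  (forall x y, f (x + y) = f x + f y) -> f 0 = 0.
Proof. by move=> fD; apply: (@addrI _ (f 0)); rewrite -fD !addr0. Qed.

Lemma addfN (U V : zmodType) (f : U -> V) :
  (forall x y, f (x + y) = f x + f y) -> forall x, f (- x) = - f x.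
Proof. by move=> fD x; apply/eqP; rewrite -addr_eq0 -fD addNr (addf0 fD). Qed.

Lemma addfB (U V : zmodType) (f : U -> V) :
  (forall x y, f (x + y) = f x + f y) -> forall x y, f (x - y) = f x - f y.
Proof. by move=> fD x y; rewrite fD (addfN fD). Qed.

Lemma addfMn (U V : zmodType) (f : U -> V) :
  (forall x y, f (x + y) = f x + f y) -> forall x (n : nat), f (x *+ n) = f x *+ n.
Proof.
move=> fD x; elim=> [|n IH]; first by rewrite !mulr0n (addf0 fD).
by rewrite !mulrS fD IH.
Qed.

Lemma addfMz (U V : zmodType) (f : U -> V) :
  (forall x y, f (x + y) = f x + f y) -> forall x (k : int), f (x *~ k) = f x *~ k.
Proof.
move=> fD x [] n; first exact: (addfMn fD).
by rewrite !NegzE !mulrNz (addfN fD) (addfMn fD).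
Qed.

Lemma addf_sum (U V : zmodType) (f : U -> V) :
  (forall x y, f (x + y) = f x + f y) ->
  forall (I : Type) (r : seq I) (P : pred I) (F : I -> U),
  f (\sum_(i <- r | P i) F i) = \sum_(i <- r | P i) f (F i).
Proof. move=> fD I r P F; exact: (big_morph f fD (addf0 fD)). Qed.

Lemma act0 (L : fieldExtType rat) (G : {pred L}) (X : GMod G) (m : X) :
  is_order G -> gm_act 0 m = 0.
Proof.
move=> hG; have := gm_actDl m (ordG0 hG) (ordG0 hG); rewrite addr0 => h.
by apply: (@addrI _ (gm_act 0 m)); rewrite addr0 -h.
Qed.

Lemma actN (L : fieldExtType rat) (G : {pred L}) (X : GMod G) (m : X) x :
  is_order G -> x \in G -> gm_act (- x) m = - gm_act x m.
Proof.
move=> hG Gx; apply/eqP; rewrite -addr_eq0 -gm_actDl ?ordGN // addNr.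
by rewrite act0.
Qed.

Lemma actMz (L : fieldExtType rat) (G : {pred L}) (X : GMod G) (m : X) x (k : int) :
  is_order G -> x \in G -> gm_act (x *~ k) m = gm_act x m *~ k.
Proof.
move=> hG Gx.
have Hn : forall n : nat, gm_act (x *+ n) m = gm_act x m *+ n.
  elim=> [|n IH]; first by rewrite !mulr0n act0.
  by rewrite !mulrS gm_actDl // ?IH //; exact: (ordGz n hG Gx).
case: k => n; first exact: Hn.
rewrite !NegzE !mulrNz actN ?Hn //; exact: (ordGz n.+1 hG Gx).
Qed.

Lemma actz (L : fieldExtType rat) (G : {pred L}) (X : GMod G) (m : X) (k : int) :
  is_order G -> gm_act (k%:~R) m = m *~ k.
Proof.
move=> hG; case: (hG) => G1 _ _ _.
by rewrite actMz // gm_act1.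
Qed.

Lemma intr_neq0_sub (L : fieldExtType rat) (K : {subfield L}) (k : int) :
  k != 0 -> (k%:~R : subvs_of K) != 0.
Proof.
move=> k0; have : vsval (k%:~R : subvs_of K) != 0 by rewrite rmorph_int intr_neq0_L.
by apply: contraNneq => ->; rewrite raddf0.
Qed.

Lemma rV_torsion (L : fieldExtType rat) (K : {subfield L}) n
  (v : 'rV[subvs_of K]_n) (e : int) : e != 0 -> v *~ e = 0 -> v = 0.
Proof.
move=> e0; rewrite -scaler_int => /eqP; rewrite scaler_eq0 => /orP [|/eqP //].
by rewrite (negbTE (intr_neq0_sub K e0)).
Qed.

Lemma lmod_torsion (V : lmodType rat) (v : V) (e : int) :
  e != 0 -> v *~ e = 0 -> v = 0.
Proof.
move=> e0; rewrite -scaler_int => /eqP; rewrite scaler_eq0 => /orP [|/eqP //].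
by rewrite intr_eq0 (negbTE e0).
Qed.

Lemma act_tors (L : fieldExtType rat) (G : {pred L}) (X : GMod G) :
  is_order G ->
  (forall (m : X) (e : int), e != 0 -> m *~ e = 0 -> m = 0) ->
  forall h (m0 : X), h \in G -> gm_act h m0 = 0 -> m0 != 0 -> h = 0.
Proof.
move=> hG tX h m0 Gh hm m00; apply/eqP/negP => /negP h0.
have [e [e0 Ge]] := ordG_denom (h^-1) hG.
have : gm_act ((h^-1 *~ e) * h) m0 = m0 *~ e.
  by rewrite -mulrzl -mulrA mulVf // mulr1 actz.
rewrite gm_actM // hm.
have -> : gm_act (h^-1 *~ e) (0 : X) = 0.
  by apply: (addf0 (f := gm_act (h^-1 *~ e))) => x y; rewrite gm_actDr.
move=> /esym /(tX _ _ e0) m0eq.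
by move: m00; rewrite m0eq eqxx.
Qed.

Lemma surj_act (L : fieldExtType rat) (G : {pred L}) (K : {subfield L}) (n : nat)
  (X : GMod G) (f : X -> 'rV[subvs_of K]_n) :
  is_order G -> (n * \dim K)%N = \dim {:L} -> injective f ->
  (forall m m', f (m + m') = f m + f m') ->
  forall m0 : X, m0 != 0 -> forall m : X,
  exists g : L, exists d : int, [/\ g \in G, d != 0 & gm_act g m0 = m *~ d].
Proof.
move=> hG hdim finj fD m0 m00 m.
have tX : forall (x : X) (e : int), e != 0 -> x *~ e = 0 -> x = 0.
  move=> x e e0 xe; apply: finj; rewrite (addf0 fD); apply: (rV_torsion e0).
  by rewrite -(addfMz fD) xe (addf0 fD).
pose dl (l : L) := proj1_sig (constructive_indefinite_description _ (ordG_denom l hG)).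
have dlP : forall l, dl l != 0 /\ l *~ dl l \in G.
  move=> l; exact: (proj2_sig (constructive_indefinite_description _ (ordG_denom l hG))).
pose V := {ffun 'I_n -> subvs_of K}.
pose w (x : X) : V := [ffun i => f x 0 i].
have wD : forall x y, w (x + y) = w x + w y.
  by move=> x y; apply/ffunP=> i; rewrite !ffunE fD mxE.
have winj : injective w.
  move=> x y /ffunP H; apply: finj; apply/rowP => i; have := H i; rewrite !ffunE.
  by [].
pose T (l : L) : V := ((dl l)%:~R : rat)^-1 *: w (gm_act (l *~ dl l) m0).
have TE : forall l (e : int), e != 0 -> l *~ e \in G ->
    T l = (e%:~R : rat)^-1 *: w (gm_act (l *~ e) m0).
  move=> l e e0 Ge; case: (dlP l) => d0 Gd.
  have H : w (gm_act (l *~ e) m0) *~ dl l = w (gm_act (l *~ dl l) m0) *~ e.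
    by rewrite -!(addfMz wD) -!actMz // -!mulrzA mulrC.
  have e0' : (e%:~R : rat) != 0 by rewrite intr_eq0.
  have d0' : ((dl l)%:~R : rat) != 0 by rewrite intr_eq0.
  have -> : w (gm_act (l *~ e) m0) = ((dl l)%:~R : rat)^-1 *: (w (gm_act (l *~ dl l) m0) *~ e).
    by rewrite -H -(scaler_int (dl l) (w _)) scalerA mulVf // scale1r.
  rewrite /T -(scaler_int e (w _)) !scalerA; congr (_ *: _).
  by field; rewrite e0' d0'.
have Tlin : linear T.
  move=> a u v.
  case: (dlP u) => du0 Gu; case: (dlP v) => dv0 Gv.
  set du := dl u in du0 Gu *; set dv := dl v in dv0 Gv *.
  set p := numq a; set q := denq a.
  have q0 : q != 0 by apply: denq_neq0.
  pose e := q * du * dv.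
  have e0 : e != 0 by rewrite !mulf_neq0.
  have Hsum : (a *: u + v) *~ e = (u *~ du) *~ (p * dv) + (v *~ dv) *~ (q * du).
    rewrite -!mulrzA mulrzDl; congr (_ + _); last first.
      by congr (_ *~ _); rewrite /e; ring.
    rewrite scalerMzl -scaler_int; congr (_ *: _).
    rewrite /e -mulrzr !intrM /p numqE -/q; ring.
  have Ge : (a *: u + v) *~ e \in G by rewrite Hsum ordGD // ordGz.
  rewrite (TE _ e e0 Ge) Hsum (gm_actDl _ (ordGz _ hG Gu) (ordGz _ hG Gv)).
  rewrite (actMz m0 (p * dv) hG Gu) (actMz m0 (q * du) hG Gv) wD !(addfMz wD).
  rewrite /T -/du -/dv -(scaler_int (p * dv)) -(scaler_int (q * du)).
  rewrite !scalerDr !scalerA; congr (_ *: _ + _ *: _).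
  - rewrite /e !intrM -(divq_num_den a) -/p -/q.
    have du' : (du%:~R : rat) != 0 by rewrite intr_eq0.
    have dv' : (dv%:~R : rat) != 0 by rewrite intr_eq0.
    have q' : (q%:~R : rat) != 0 by rewrite intr_eq0.
    by field; rewrite ?du' ?dv' ?q'.
  - rewrite /e !intrM.
    have du' : (du%:~R : rat) != 0 by rewrite intr_eq0.
    have dv' : (dv%:~R : rat) != 0 by rewrite intr_eq0.
    have q' : (q%:~R : rat) != 0 by rewrite intr_eq0.
    by field; rewrite ?du' ?dv' ?q'.
pose TL : {linear L -> V} := HB.pack T (GRing.isLinear.Build rat L V *:%R T Tlin).
have T0 : forall l, T l = 0 -> l = 0.
  move=> l; rewrite /T; case: (dlP l) => d0 Gd /eqP.
  rewrite scaler_eq0 invr_eq0 intr_eq0 (negbTE d0) /= => /eqP H.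
  have : f (gm_act (l *~ dl l) m0) = f 0.
    apply/rowP => i; have := congr1 (fun F : V => F i) H.
    by rewrite !ffunE (addf0 fD) mxE => ->.
  move/finj => /(act_tors hG tX Gd) /(_ m00) H2.
  exact: (lmod_torsion d0 H2).
have Tinj : injective TL.
  move=> x y Hxy; have Hxy' : T x = T y := Hxy.
  have HB : T (x - y) = T x - T y := raddfB TL x y.
  apply/eqP; rewrite -subr_eq0; apply/eqP; apply: T0.
  by rewrite HB Hxy' subrr.
have lk : lker (linfun TL) == 0%VS by apply/lker0P => x y; rewrite !lfunE; apply: Tinj.
have dimV : \dim {:V} = \dim {:L} by rewrite dimvf /dim /= card_ord.
have img : limg (linfun TL) = fullv.
  apply/eqP; rewrite eqEdim subvf /= limg_dim_eq ?dimV //.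
  by rewrite (eqP lk) capv0.
have : w m \in limg (linfun TL) by rewrite img memvf.
case/memv_imgP => l _; rewrite lfunE /= => Hl.
case: (dlP l) => d0 Gd.
exists (l *~ dl l), (dl l); split => //.
apply: winj; rewrite (addfMz wD) Hl /T -(scaler_int (dl l) (_ *: _)) scalerA mulfV ?scale1r //.
by rewrite intr_eq0.
Qed.

Definition good (L : fieldExtType rat) (G : {pred L}) (X : GMod G) (psi : X -> L) : Prop :=
  [/\ injective psi, (forall m m', psi (m + m') = psi m + psi m'),
      (forall g m, g \in G -> psi (gm_act g m) = g * psi m) &
      frac_ideal G (fun y => exists m, psi m = y)].

Lemma roi_int (L : fieldExtType rat) (K : {subfield L}) (k : int) :
  ring_of_integers (k%:~R : subvs_of K).
Proof.
exists ('X - k%:P); split; first exact: monicXsubC.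
by rewrite map_polyXsubC hornerXsubC /= subrr.
Qed.

Lemma good_exists (L : fieldExtType rat) (G : {pred L}) (K : {subfield L})
  (phi : {rmorphism subvs_of K -> L}) (z : nat) (X : GMod G) :
  is_order G -> (0 < z)%N ->
  (forall b : subvs_of K, ring_of_integers b -> phi (z%:R * b) \in G) ->
  in_J phi z (\dim_K {:L}) X -> exists psi : X -> L, good psi.
Proof.
move=> hG z0 hphi [f [finj fsurj fD fO]].
set n := \dim_K {:L} in f finj fsurj fD fO *.
have hdim : (n * \dim K)%N = \dim {:L}.
  by rewrite /n divnK // field_dimS // subvf.
have n0 : (0 < n)%N by rewrite /n divn_gt0 ?adim_gt0 // dimvS // subvf.
have hm : forall i : 'I_n, exists mi : X, f mi = 'e_i.
  move=> i; apply/fsurj => j; rewrite mxE; exact: (roi_int K (_ : nat)).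
pose ms i := proj1_sig (constructive_indefinite_description _ (hm i)).
have msP : forall i, f (ms i) = 'e_i.
  move=> i; exact: (proj2_sig (constructive_indefinite_description _ (hm i))).
pose i0 := Ordinal n0.
pose m0 := ms i0.
have m00 : m0 != 0.
  apply/eqP => H; have := msP i0; rewrite -/m0 H (addf0 fD) => /rowP /(_ i0).
  by rewrite !mxE !eqxx /= => /eqP; rewrite eq_sym oner_eq0.
have tX : forall (x : X) (e : int), e != 0 -> x *~ e = 0 -> x = 0.
  move=> x e e0 xe; apply: finj; rewrite (addf0 fD); apply: (rV_torsion e0).
  by rewrite -(addfMz fD) xe (addf0 fD).
have surj := surj_act hG hdim finj fD m00.
pose gm m := proj1_sig (constructive_indefinite_description _ (surj m)).
have gmP1 : forall m, exists d : int, [/\ gm m \in G, d != 0 & gm_act (gm m) m0 = m *~ d].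
  move=> m; exact: (proj2_sig (constructive_indefinite_description _ (surj m))).
pose dm m := proj1_sig (constructive_indefinite_description _ (gmP1 m)).
have gmP : forall m, [/\ gm m \in G, dm m != 0 & gm_act (gm m) m0 = m *~ dm m].
  move=> m; exact: (proj2_sig (constructive_indefinite_description _ (gmP1 m))).
pose psi m := gm m / (dm m)%:~R.
have psiE : forall m g (d : int), g \in G -> d != 0 -> gm_act g m0 = m *~ d ->
    psi m = g / d%:~R.
  move=> m g d Gg d0 Hg; case: (gmP m) => Gg' d0' Hg'.
  have Hz : g *~ dm m - gm m *~ d = 0.
    apply: (act_tors hG tX _ _ m00); first by rewrite ordGB ?ordGz.
    rewrite gm_actDl ?ordGN ?ordGz // actN ?ordGz // !actMz // Hg Hg'.
    by rewrite -!mulrzA mulrC subrr.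
  move/subr0_eq: Hz; rewrite -(mulrzr g) -(mulrzr (gm m)) => Hz.
  apply/eqP; rewrite /psi eqr_div ?intr_neq0_L //; apply/eqP.
  by rewrite -Hz.
have psiD : forall m m', psi (m + m') = psi m + psi m'.
  move=> m m'; case: (gmP m) => G1 d1 H1; case: (gmP m') => G2 d2 H2.
  rewrite (psiE _ (gm m *~ dm m' + gm m' *~ dm m) (dm m * dm m')).
  - rewrite /psi -(mulrzr (gm m)) -(mulrzr (gm m')) intrM; field.
    by rewrite !intr_neq0_L.
  - by rewrite ordGD ?ordGz.
  - by rewrite mulf_neq0.
  - rewrite gm_actDl ?ordGz // !actMz // H1 H2 -!mulrzA mulrzDl.
    by rewrite [dm m' * _]mulrC.
have psiG : forall g m, g \in G -> psi (gm_act g m) = g * psi m.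
  move=> g m Gg; case: (gmP m) => G1 d1 H1.
  rewrite (psiE _ (g * gm m) (dm m)) ?ordGM //; first by rewrite /psi mulrA.
  rewrite gm_actM // H1.
  by apply: (addfMz (f := gm_act g)) => x y; rewrite gm_actDr.
have psi0 : psi 0 = 0 := addf0 psiD.
have psi1 : psi m0 = 1.
  case: (hG) => G1 _ _ _.
  by rewrite (psiE _ 1 1) ?gm_act1 // mul1r invr1.
have psiinj : injective psi.
  move=> m m' H; apply/subr0_eq.
  case: (gmP (m - m')) => G1 d1 H1.
  have : psi (m - m') = 0 by rewrite (addfB psiD) H subrr.
  rewrite /psi => /eqP; rewrite mulf_eq0 invr_eq0 (negbTE (intr_neq0_L L d1)) orbF.
  move=> /eqP g0; rewrite g0 act0 // in H1.
  by apply: (tX _ _ d1); rewrite -H1.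
exists psi; split => //; split.
- by exists 0.
- by move=> x y [m <-] [m' <-]; exists (m + m'); apply: psiD.
- by move=> g x Gg [m <-]; exists (gm_act g m); rewrite psiG.
- by exists 1; split; [exact: oner_neq0 | exists m0].
have hsum : forall m, psi m *+ z =
    \sum_(i < n) phi (z%:R * f m 0 i) * psi (ms i).
  move=> m; rewrite -(addfMn psiD).
  have roim : forall i, ring_of_integers (f m 0 i).
    by move=> i; apply: ((proj2 (fsurj (f m))) _ i); exists m.
  have -> : m *+ z = \sum_(i < n) gm_act (phi (z%:R * f m 0 i)) (ms i).
    apply: finj; rewrite (addf_sum fD) (addfMn fD).
    have Hi : forall i, f (gm_act (phi (z%:R * f m 0 i)) (ms i)) = (z%:R * f m 0 i) *: 'e_i.
      move=> i; rewrite fO ?msP //; exists 0, (f m 0 i); split => //.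
      by rewrite ?mulr0z add0r.
    rewrite (eq_bigr _ (fun i _ => Hi i)).
    rewrite -scaler_nat {1}(row_sum_delta (f m)) scaler_sumr.
    by apply: eq_bigr => i _; rewrite scalerA.
  rewrite (addf_sum psiD); apply: eq_bigr => i _; rewrite psiG //.
  by apply: hphi.
have [D [D0 HD]] := ordG_denoms [seq psi (ms i) | i <- enum 'I_n] hG.
exists (D%:~R * z%:R); split.
  rewrite mulf_neq0 ?intr_neq0_L //.
  by have := intr_neq0_L L (k := z%:Z); rewrite -lt0n z0 => /(_ isT).
move=> y [m <-].
have roim : forall i, ring_of_integers (f m 0 i).
  by move=> i; apply: ((proj2 (fsurj (f m))) _ i); exists m.
rewrite -mulrA mulr_natl mulrzl hsum mulrz_suml; apply: ordG_sum => // i _.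
rewrite -mulrzAr ordGM //.
  by apply: hphi.
by apply: HD; apply/mapP; exists i; rewrite ?mem_enum.
Qed.

Lemma iso_equiv (L : fieldExtType rat) (G : {pred L}) (X Y : GMod G)
  (psiX : X -> L) (psiY : Y -> L) : good psiX -> good psiY -> gmod_iso X Y ->
  frac_equiv (fun y => exists m, psiX m = y) (fun y => exists m, psiY m = y).
Proof.
move=> [iX aX gX [_ _ _ [a [a0 [m1 Hm1]]] [x0 [x00 Hx0]]]] [iY aY gY _].
move=> [h [[k hk kh] [hD hG']]].
have hinj : injective h := can_inj hk.
have key : forall m, psiY (h m) * a = psiY (h m1) * psiX m.
  move=> m.
  have G1 : x0 * a \in G by apply: Hx0; exists m1.
  have G2 : x0 * psiX m \in G by apply: Hx0; exists m.
  have E : gm_act (x0 * a) m = gm_act (x0 * psiX m) m1.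
    by apply: iX; rewrite !gX // -Hm1 mulrAC.
  have := congr1 (fun t => psiY (h t)) E; rewrite /= !hG' // !gY // => E2.
  apply: (mulfI x00).
  by rewrite [LHS]mulrA [LHS]mulrAC E2 [LHS]mulrAC -[LHS]mulrA.
have m10 : h m1 != 0.
  apply/eqP => H; move: a0; rewrite -Hm1.
  have -> : m1 = 0 by apply: hinj; rewrite H (addf0 hD).
  by rewrite (addf0 aX) eqxx.
have c0 : psiY (h m1) / a != 0.
  rewrite mulf_neq0 ?invr_eq0 //; apply/eqP => H.
  by move: m10; rewrite (iY (h m1) 0) ?eqxx // H (addf0 aY).
exists (psiY (h m1) / a); split => // y; split.
- case=> m' <-; exists (psiX (k m')); split; first by exists (k m').
  by rewrite mulrAC -key mulfK // kh.
- case=> w [[m <-] ->]; exists (h m).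
  by rewrite mulrAC -key mulfK.
Qed.

Lemma equiv_iso (L : fieldExtType rat) (G : {pred L}) (X Y : GMod G)
  (psiX : X -> L) (psiY : Y -> L) : good psiX -> good psiY ->
  frac_equiv (fun y => exists m, psiX m = y) (fun y => exists m, psiY m = y) ->
  gmod_iso X Y.
Proof.
move=> [iX aX gX _] [iY aY gY _] [c [c0 Hc]].
have Hex : forall m, exists m', psiY m' = c * psiX m.
  by move=> m; apply/Hc; exists (psiX m); split => //; exists m.
have Hex' : forall m', exists m, psiX m = c^-1 * psiY m'.
  move=> m'.
  have [w [[m Hm] Hy]] : exists w, (exists m, psiX m = w) /\ psiY m' = c * w.
    by apply/Hc; exists m'.
  by exists m; rewrite Hm Hy mulrA mulVf // mul1r.
pose h m := proj1_sig (constructive_indefinite_description _ (Hex m)).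
have hP : forall m, psiY (h m) = c * psiX m.
  move=> m; exact: (proj2_sig (constructive_indefinite_description _ (Hex m))).
pose k m := proj1_sig (constructive_indefinite_description _ (Hex' m)).
have kP : forall m, psiX (k m) = c^-1 * psiY m.
  move=> m; exact: (proj2_sig (constructive_indefinite_description _ (Hex' m))).
exists h; split; [exists k|split].
- by move=> m; apply: iX; rewrite kP hP mulrA mulVf // mul1r.
- by move=> m'; apply: iY; rewrite hP kP mulrA mulfV // mul1r.
- by move=> m m'; apply: iY; rewrite aY !hP aX mulrDr.
- by move=> x m Gx; apply: iY; rewrite gY // !hP gX // mulrCA.
Qed.

Theorem lemma10p6 (L : fieldExtType rat) (G : {pred L}) (K : {subfield L})
  (phi : {rmorphism subvs_of K -> L}) (z : nat) :
  is_order G ->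
  (0 < z)%N ->
  (forall b : subvs_of K, ring_of_integers b -> phi (z%:R * b) \in G) ->
  exists F : GMod G -> (L -> Prop),
    (forall X : GMod G, in_J phi z (\dim_K {:L}) X -> frac_ideal G (F X)) /\
    (forall X Y : GMod G, in_J phi z (\dim_K {:L}) X ->
                          in_J phi z (\dim_K {:L}) Y ->
       (gmod_iso X Y <-> frac_equiv (F X) (F Y))).
Proof.
move=> hG z0 hphi.
pose psi (X : GMod G) := epsilon (inhabits (fun _ : X => 0 : L)) (@good L G X).
have psiP : forall X, in_J phi z (\dim_K {:L}) X -> good (psi X).
  move=> X HJ; apply: epsilon_spec; exact: (good_exists hG z0 hphi HJ).
exists (fun X y => exists m, psi X m = y); split.
  by move=> X HJ; case: (psiP X HJ).
move=> X Y HX HY; split.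
  exact: iso_equiv (psiP X HX) (psiP Y HY).
exact: equiv_iso (psiP X HX) (psiP Y HY).
Qed.
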